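(* Let $d_1\leq d_2$ and let $X$ be a positive semidefinite matrix in $\mathcal{M}_{d_1}\otimes\mathcal{M}_{d_2}$, written as $X=\sum_{i,j=1}^{d_1}\ket{i}\bra{j}\otimes X_{ij}$ with blocks $X_{ij}\in\mathcal{M}_{d_2}$. If $\mathrm{SN}(X)=k\geq 2$, then there exist distinct indices $m_1,\ldots,m_{d_1-k+2}\in\{1,\ldots,d_1\}$ such that the principal sub-block matrix \[ Y=\sum_{s,t=1}^{d_1-k+2}\ket{s}\bra{t}\otimes X_{m_sm_t}\in\mathcal{M}_{d_1-k+2}\otimes\mathcal{M}_{d_2} \] (which is positive semidefinite) is entangled.
   Context: $\mathcal{M}_d$: complex $d\times d$ matrices. A positive semidefinite $W\in\mathcal{M}_{a}\otimes\mathcal{M}_{b}$ is separable if it is a finite sum $\sum_i P_i\otimes Q_i$ with $P_i,Q_i$ positive semidefinite, and entangled otherwise. The Schmidt rank of $\ket{\psi}\in\mathbb{C}^{a}\otimes\mathbb{C}^{b}$ is the rank of $\mathrm{tr}_A\ket{\psi}\bra{\psi}$; for a nonzero positive semidefinite $W$, $\mathrm{SN}(W)$ is the minimum over decompositions $W=\sum_ip_i\ket{\psi_i}\bra{\psi_i}$ ($p_i>0$) of the maximal Schmidt rank of the $\ket{\psi_i}$. *)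

(* Defs.v *)
(* Complex numbers are R[i] (mathcomp-real-closed's complex)
   over an arbitrary R : realType (i.e. a model of the real numbers), tensor
   products are mathcomp-real-closed's Kronecker product [tensmx]
   (index convention (i,k) |-> i * d2 + k, first factor outer). *)
From mathcomp Require Import all_boot all_algebra.
From mathcomp Require Import reals.
From mathcomp Require Export complex mxtens.
Set Implicit Arguments. Unset Strict Implicit. Unset Printing Implicit Defensive.
Import GRing.Theory Num.Theory.
Local Open Scope ring_scope.

Section QDefs.
Variable C : numClosedFieldType.

Definition adjmx (m n : nat) (A : 'M[C]_(m, n)) : 'M[C]_(n, m) :=
  (map_mx Num.conj A)^T.

Definition psd (n : nat) (A : 'M[C]_n) : Prop :=
  adjmx A = A /\ forall v : 'cV[C]_n, 0 <= (adjmx v *m A *m v) 0 0.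

Definition separable (a b : nat) (W : 'M[C]_(a * b)) : Prop :=
  psd W /\
  exists s : seq ('M[C]_a * 'M[C]_b),
    (forall PQ, PQ \in s -> psd PQ.1 /\ psd PQ.2) /\
    W = \sum_(PQ <- s) tensmx PQ.1 PQ.2.

Definition entangled (a b : nat) (W : 'M[C]_(a * b)) : Prop :=
  psd W /\ ~ separable W.

Definition ptraceA (a b : nat) (W : 'M[C]_(a * b)) : 'M[C]_b :=
  \matrix_(k, l) \sum_(i < a) W (mxtens_index (i, k)) (mxtens_index (i, l)).

Definition schmidt_rank (a b : nat) (psi : 'cV[C]_(a * b)) : nat :=
  \rank (ptraceA (psi *m adjmx psi)).

Definition pure_decomp (a b : nat) (W : 'M[C]_(a * b))
    (s : seq (C * 'cV[C]_(a * b))) : Prop :=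
  (forall x, x \in s -> 0 < x.1) /\
  W = \sum_(x <- s) x.1 *: (x.2 *m adjmx x.2).

Definition SN_le (a b : nat) (W : 'M[C]_(a * b)) (k : nat) : Prop :=
  exists s, pure_decomp W s /\ forall x, x \in s -> (schmidt_rank x.2 <= k)%N.

Definition schmidt_number_is (a b : nat) (W : 'M[C]_(a * b)) (k : nat) : Prop :=
  SN_le W k /\ forall j, SN_le W j -> (k <= j)%N.

(* principal sub-block matrix sum_{s,t} |s><t| (x) X_{m_s m_t} *)
Definition subblock (d1 d2 n : nat) (X : 'M[C]_(d1 * d2)) (m : 'I_n -> 'I_d1)
  : 'M[C]_(n * d2) :=
  \matrix_(p, q)
    X (mxtens_index (m (mxtens_unindex p).1, (mxtens_unindex p).2))
      (mxtens_index (m (mxtens_unindex q).1, (mxtens_unindex q).2)).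

End QDefs.

(* Main.v *)
Require Import Defs.
From mathcomp Require Import all_boot all_algebra.
From mathcomp Require Import reals complex mxtens.
From mathcomp Require Import order.
From Stdlib Require Import Classical_Prop.
From mathcomp Require Import zify.
Import GRing.Theory Num.Theory.
Local Open Scope ring_scope.

Module Helpers.
Import Order.TTheory.
Set Implicit Arguments. Unset Strict Implicit. Unset Printing Implicit Defensive.
Section Basics.
Variable C : numClosedFieldType.

Lemma adjmxE m n (A : 'M[C]_(m,n)) i j : adjmx A i j = (A j i)^*.
Proof. by rewrite !mxE. Qed.

Lemma adjmxK m n (A : 'M[C]_(m,n)) : adjmx (adjmx A) = A.
Proof. by apply/matrixP => i j; rewrite !mxE conjCK. Qed.

Lemma adjmxD m n (A B : 'M[C]_(m,n)) : adjmx (A + B) = adjmx A + adjmx B.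
Proof. by apply/matrixP => i j; rewrite !mxE rmorphD. Qed.

Lemma adjmxN m n (A : 'M[C]_(m,n)) : adjmx (- A) = - adjmx A.
Proof. by apply/matrixP => i j; rewrite !mxE rmorphN. Qed.

Lemma adjmxB m n (A B : 'M[C]_(m,n)) : adjmx (A - B) = adjmx A - adjmx B.
Proof. by rewrite adjmxD adjmxN. Qed.

Lemma adjmx0 m n : adjmx (0 : 'M[C]_(m,n)) = 0.
Proof. by apply/matrixP => i j; rewrite !mxE rmorph0. Qed.

Lemma adjmxZ m n a (A : 'M[C]_(m,n)) : adjmx (a *: A) = a^* *: adjmx A.
Proof. by apply/matrixP => i j; rewrite !mxE rmorphM. Qed.

Lemma adjmxM m n p (A : 'M[C]_(m,n)) (B : 'M[C]_(n,p)) :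
  adjmx (A *m B) = adjmx B *m adjmx A.
Proof.
apply/matrixP => i j; rewrite !mxE rmorph_sum; apply: eq_bigr => k _.
by rewrite !mxE rmorphM mulrC.
Qed.

Lemma adjmx1 n : adjmx (1%:M : 'M[C]_n) = 1%:M.
Proof. by apply/matrixP => i j; rewrite !mxE eq_sym rmorph_nat. Qed.

Lemma adjmx_delta m n i j : adjmx (delta_mx i j : 'M[C]_(m,n)) = delta_mx j i.
Proof. by apply/matrixP => a b; rewrite !mxE andbC rmorph_nat. Qed.

Lemma adjmx_sum I m n (r : seq I) (F : I -> 'M[C]_(m,n)) :
  adjmx (\sum_(x <- r) F x) = \sum_(x <- r) adjmx (F x).
Proof.
elim: r => [|x r IH]; first by rewrite !big_nil adjmx0.
by rewrite !big_cons adjmxD IH.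
Qed.

Lemma psd_herm n (A : 'M[C]_n) : psd A -> adjmx A = A.
Proof. by case. Qed.

Lemma psd_congr m n (X : 'M[C]_m) (E : 'M[C]_(m,n)) :
  psd X -> psd (adjmx E *m X *m E).
Proof.
case=> hH hq; split.
  by rewrite !adjmxM adjmxK hH mulmxA.
move=> v; have := hq (E *m v).
by rewrite adjmxM !mulmxA.
Qed.

Definition decomp n (W : 'M[C]_n) (s : seq (C * 'cV[C]_n)) : Prop :=
  (forall x, x \in s -> 0 < x.1) /\
  W = \sum_(x <- s) x.1 *: (x.2 *m adjmx x.2).

Lemma decomp_congr m n (W : 'M[C]_n) (E : 'M[C]_(m,n)) s :
  decomp W s ->
  decomp (E *m W *m adjmx E) (map (fun x => (x.1, E *m x.2)) s).
Proof.
case=> hp ->; split.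
  by move=> x /mapP [y ys ->] /=; apply: hp.
rewrite big_map mulmx_sumr mulmx_suml; apply: eq_bigr => x _ /=.
by rewrite -scalemxAr -scalemxAl adjmxM !mulmxA.
Qed.

Lemma decomp_cat n (W1 W2 : 'M[C]_n) s1 s2 :
  decomp W1 s1 -> decomp W2 s2 -> decomp (W1 + W2) (s1 ++ s2).
Proof.
case=> h1 -> [h2 ->]; split; last by rewrite big_cat.
by move=> x; rewrite mem_cat => /orP [] ?; [apply: h1 | apply: h2].
Qed.


Lemma delta_quad n (A : 'M[C]_n) i j :
  delta_mx 0 i *m A *m delta_mx j 0 = (A i j)%:M :> 'M_1.
Proof.
rewrite -rowE -colE; apply/matrixP => a b.
by rewrite !ord1 !mxE eqxx mulr1n.
Qed.

Lemma colE' n m (A : 'M[C]_(n,m)) i a : (A *m (delta_mx i 0 : 'cV_m)) a 0 = A a i.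
Proof. by rewrite -colE mxE. Qed.

Lemma outerE n (u v : 'cV[C]_n) a b : (u *m adjmx v) a b = u a 0 * (v b 0)^*.
Proof. by rewrite !mxE big_ord1 !mxE. Qed.

Lemma psd_diag_ge0 n (A : 'M[C]_n) i : psd A -> 0 <= A i i.
Proof.
case=> _ /(_ (delta_mx i 0)); rewrite adjmx_delta delta_quad.
by rewrite mxE eqxx mulr1n.
Qed.

Lemma psd_diag0 n (A : 'M[C]_n) : psd A -> (forall i, A i i = 0) -> A = 0.
Proof.
move=> hA hd; apply/matrixP => i j; rewrite mxE.
case: hA => hH hq.
have hji : A j i = (A i j)^* by rewrite -{1}hH adjmxE.
set a := A i j in hji *.
pose s := - a^*.
have := hq (delta_mx i 0 + s *: delta_mx j 0).
rewrite adjmxD adjmxZ !adjmx_delta !mulmxDl !mulmxDr -!scalemxAl -!scalemxAr.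
rewrite !delta_quad !hd hji !mxE !eqxx !mulr1n /s.
rewrite -/a !mulr0 add0r addr0.
have -> : (- a^*)^* = - a by apply: (canLR (@conjCK C)); rewrite rmorphN.
move=> h.
have hn : 0 <= a * a^* by rewrite mul_conjC_ge0.
have e : - a^* * a + - a * a^* = - (a * a^* + a * a^*).
  by rewrite !mulNr -opprD [a^* * a]mulrC.
rewrite e oppr_ge0 in h.
have : a * a^* <= 0 by apply: le_trans h; rewrite lerDl.
move=> h2; have /eqP : a * a^* = 0 by apply/eqP; rewrite eq_le h2 hn.
by rewrite mulf_eq0 conjC_eq0 orbb => /eqP.
Qed.

Lemma peel_congr n (P : 'M[C]_n) i (c : C) : adjmx P = P -> c^* = c ->
  c * P i i = 1 ->
  let u := P *m (delta_mx i 0 : 'cV_n) in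
  let E := 1%:M - c *: ((delta_mx i 0 : 'cV_n) *m adjmx u) in
  adjmx E *m P *m E = P - c *: (u *m adjmx u).
Proof.
move=> hH hc hcP u E.
have hu' : delta_mx 0 i *m P = adjmx u by rewrite /u adjmxM hH adjmx_delta.
have e1 : P *m (delta_mx i 0 *m adjmx u) = u *m adjmx u by rewrite mulmxA.
have e2 : (u *m delta_mx 0 i) *m P = u *m adjmx u by rewrite -mulmxA hu'.
have e3 : (u *m delta_mx 0 i) *m P *m (delta_mx i 0 *m adjmx u)
          = P i i *: (u *m adjmx u).
  have -> : (u *m delta_mx 0 i) *m P *m (delta_mx i 0 *m adjmx u)
      = u *m (delta_mx 0 i *m P *m delta_mx i 0) *m adjmx u by rewrite !mulmxA.
  by rewrite delta_quad mul_mx_scalar scalemxAl.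
rewrite /E adjmxB adjmx1 adjmxZ adjmxM adjmxK adjmx_delta hc.
rewrite mulmxBl mul1mx -scalemxAl mulmxBr mulmx1 mulmxBl -!scalemxAr -scalemxAl.
rewrite e3 e1 e2 !scalerA.
by rewrite -mulrA hcP mulr1 subrr subr0.
Qed.

Lemma psd_decomp n (P : 'M[C]_n) : psd P -> exists s, decomp P s.
Proof.
move=> hP.
have [k hk] : exists k : nat, leq #|[pred i | P i i != 0]| k by exists #|[pred i | P i i != 0]|.
elim: k P hP hk => [|k IH] P hP hk.
  have h0 : forall i, P i i = 0.
    move=> i; move: hk; rewrite leqn0 => /eqP /card0_eq /(_ i).
    by rewrite !inE => /negbFE /eqP.
  by exists [::]; split => //; rewrite big_nil; apply: psd_diag0.
case: (pickP [pred i | P i i != 0]) => [i /= hi | h0]; last first.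
  have h0' : forall i, P i i = 0 by move=> i; move: (h0 i) => /= /negbFE /eqP.
  by exists [::]; split => //; rewrite big_nil; apply: psd_diag0.
have hPi : 0 < P i i by rewrite lt_def hi psd_diag_ge0.
set c := (P i i)^-1.
have hc0 : 0 < c by rewrite invr_gt0.
have hc : c^* = c by rewrite geC0_conj // ltW.
have hcP : c * P i i = 1 by rewrite mulVf.
have hPc : (P i i)^* = P i i by rewrite geC0_conj // ltW.
set u := P *m (delta_mx i 0 : 'cV_n).
set P' := P - c *: (u *m adjmx u).
have hP' : psd P'.
  rewrite /P' /u -(peel_congr (psd_herm hP) hc hcP); exact: psd_congr.
have hP'E : forall j, P' j j = P j j - c * (P j i * (P j i)^*).
  by move=> j; rewrite /P' 2!mxE mxE outerE /u !colE'.
have hprop : [pred j | P' j j != 0] \proper [pred j | P j j != 0].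
  apply/properP; split.
    apply/subsetP => j; rewrite !inE; apply: contraNN => /eqP hj.
    have h1 := psd_diag_ge0 j hP'.
    have h2 : P' j j <= 0.
      rewrite hP'E hj sub0r oppr_le0; apply: mulr_ge0; first exact: ltW.
      exact: mul_conjC_ge0.
    by rewrite eq_le h1 h2.
  exists i; first by rewrite inE.
  by rewrite inE hP'E hPc mulrA hcP mul1r subrr eqxx.
have hk' : leq #|[pred j | P' j j != 0]| k.
  by rewrite -ltnS; apply: leq_trans hk; apply: proper_card.
have [s' [hs'1 hs'2]] := IH P' hP' hk'.
exists ((c, u) :: s'); split.
  by move=> x; rewrite inE => /orP [/eqP -> //|]; apply: hs'1.
by rewrite big_cons /= -hs'2 /P' addrC subrK.
Qed.

End Basics.

Section Tens.
Variable C : numClosedFieldType.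

Definition rsh a b (x : 'cV[C]_(a*b)) : 'M[C]_(a,b) :=
  \matrix_(i, k) x (mxtens_index (i, k)) 0.

Definition rk a b (x : 'cV[C]_(a*b)) := \rank (rsh x).

Lemma sr_le a b (x : 'cV[C]_(a*b)) : (schmidt_rank x <= rk x)%N.
Proof.
rewrite /schmidt_rank /rk.
have -> : ptraceA (x *m adjmx x) = (rsh x)^T *m map_mx Num.conj (rsh x).
  apply/matrixP => k l; rewrite !mxE; apply: eq_bigr => i _.
  by rewrite outerE !mxE.
by apply: leq_trans (mxrankM_maxl _ _) _; rewrite mxrank_tr.
Qed.

Lemma rshD a b (x y : 'cV[C]_(a*b)) : rsh (x + y) = rsh x + rsh y.
Proof. by apply/matrixP => i k; rewrite !mxE. Qed.

Lemma rk_add a b (x y : 'cV[C]_(a*b)) : (rk (x + y) <= rk x + rk y)%N.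
Proof. by rewrite /rk rshD mxrank_add. Qed.

Lemma sum_tens a b (F : 'I_(a*b) -> C) :
  \sum_p F p = \sum_(i < a) \sum_(k < b) F (mxtens_index (i, k)).
Proof.
rewrite pair_big /= (reindex (@mxtens_index a b)) /=.
  by apply: eq_bigr => [[i k]].
by exists (@mxtens_unindex a b) => x _; rewrite ?mxtens_indexK ?mxtens_unindexK.
Qed.

Lemma sum_deltal N (t : 'I_N) (F : 'I_N -> C) :
  \sum_u (u == t)%:R * F u = F t.
Proof.
rewrite (bigD1 t) //= eqxx mul1r big1 ?addr0 // => u /negbTE ->.
by rewrite mul0r.
Qed.

Lemma sum_deltar N (t : 'I_N) (F : 'I_N -> C) :
  \sum_u F u * (u == t)%:R = F t.
Proof.
rewrite -[RHS](sum_deltal t); apply: eq_bigr => u _; exact: mulrC.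
Qed.

Definition Pm a n b (m : 'I_n -> 'I_a) : 'M[C]_(a*b, n*b) :=
  \matrix_(u, p)
    ((u == mxtens_index (m (mxtens_unindex p).1, (mxtens_unindex p).2))%:R).

Lemma subblockE a b n (X : 'M[C]_(a*b)) (m : 'I_n -> 'I_a) :
  subblock X m = adjmx (Pm b m) *m X *m Pm b m.
Proof.
apply/matrixP => p q; rewrite !mxE.
under eq_bigr => v _ do rewrite !mxE.
under eq_bigr => v _ do under eq_bigr => u _ do rewrite !mxE rmorph_nat.
under eq_bigr => v _ do rewrite sum_deltal.
by rewrite sum_deltar.
Qed.

Definition Sel a n (m : 'I_n -> 'I_a) : 'M[C]_(a, n) :=
  \matrix_(i, j) ((i == m j)%:R).

Lemma Pm_rsh a n b (m : 'I_n -> 'I_a) (x : 'cV[C]_(n*b)) :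
  rsh (Pm b m *m x) = Sel m *m rsh x.
Proof.
apply/matrixP => i k; rewrite !mxE sum_tens; apply: eq_bigr => j _.
rewrite !mxE.
under eq_bigr => l _ do rewrite !mxE mxtens_indexK /= (can_eq (@mxtens_indexK _ _)) xpair_eqE -mulnb natrM -mulrA.
rewrite -mulr_sumr; congr (_ * _); rewrite -[RHS](sum_deltal k (fun l => x (mxtens_index (j, l)) 0)); apply: eq_bigr => l _; by rewrite eq_sym.
Qed.

Lemma rk_Pm a n b (m : 'I_n -> 'I_a) (x : 'cV[C]_(n*b)) :
  (rk (Pm b m *m x) <= rk x)%N.
Proof. by rewrite /rk Pm_rsh mxrankM_maxr. Qed.

Lemma rk_1 b (w : 'cV[C]_(1*b)) : (rk w <= 1)%N.
Proof. exact: rank_leq_row. Qed.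

Lemma subblock_comp a b n n2 (X : 'M[C]_(a*b)) (m : 'I_n -> 'I_a)
  (m2 : 'I_n2 -> 'I_n) : subblock (subblock X m) m2 = subblock X (m \o m2).
Proof. by apply/matrixP => p q; rewrite !mxE !mxtens_indexK. Qed.

Lemma subblock_id a b (X : 'M[C]_(a*b)) : subblock X id = X.
Proof. by apply/matrixP => p q; rewrite !mxE !mxtens_unindexK. Qed.

Lemma psd_subblock a b n (X : 'M[C]_(a*b)) (m : 'I_n -> 'I_a) :
  psd X -> psd (subblock X m).
Proof. by rewrite subblockE; apply: psd_congr. Qed.

Definition SNr n b (W : 'M[C]_(n*b)) r :=
  exists s, decomp W s /\ forall x, x \in s -> (rk x.2 <= r)%N.

Lemma SNr_SN n b (W : 'M[C]_(n*b)) r : SNr W r -> SN_le W r.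
Proof.
case=> s [hs hr]; exists s; split => // x xs.
exact: leq_trans (sr_le _) (hr x xs).
Qed.

End Tens.

Section Sep.
Variable C : numClosedFieldType.

Definition vt a b (v : 'cV[C]_a) (w : 'cV[C]_b) : 'cV[C]_(a*b) :=
  \col_p (v (mxtens_unindex p).1 0 * w (mxtens_unindex p).2 0).

Lemma tens_outer a b (v : 'cV[C]_a) (w : 'cV[C]_b) :
  tensmx (v *m adjmx v) (w *m adjmx w) = vt v w *m adjmx (vt v w).
Proof.
apply/matrixP => p q; rewrite outerE [LHS]mxE !outerE !mxE.
by rewrite rmorphM mulrACA.
Qed.

Lemma rk_vt a b (v : 'cV[C]_a) (w : 'cV[C]_b) : (rk (vt v w) <= 1)%N.
Proof. rewrite /rk.
have -> : rsh (vt v w) = v *m w^T.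
  by apply/matrixP => i k; rewrite !mxE big_ord1 !mxE mxtens_indexK.
by apply: leq_trans (mxrankM_maxl _ _) _; apply: rank_leq_col.
Qed.

Lemma tensmxDl m n p q (A B : 'M[C]_(m,n)) (M : 'M[C]_(p,q)) :
  tensmx (A + B) M = tensmx A M + tensmx B M.
Proof. by apply/matrixP => i j; rewrite !mxE mulrDl. Qed.
Lemma tensmxDr m n p q (A : 'M[C]_(m,n)) (M N : 'M[C]_(p,q)) :
  tensmx A (M + N) = tensmx A M + tensmx A N.
Proof. by apply/matrixP => i j; rewrite !mxE mulrDr. Qed.
Lemma tensmxZl m n p q c (A : 'M[C]_(m,n)) (M : 'M[C]_(p,q)) :
  tensmx (c *: A) M = c *: tensmx A M.
Proof. by apply/matrixP => i j; rewrite !mxE mulrA. Qed.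
Lemma tensmxZr m n p q c (A : 'M[C]_(m,n)) (M : 'M[C]_(p,q)) :
  tensmx A (c *: M) = c *: tensmx A M.
Proof. by apply/matrixP => i j; rewrite !mxE mulrCA. Qed.

Lemma tensmx_suml I m n p q (r : seq I) (F : I -> 'M[C]_(m,n)) (M : 'M[C]_(p,q)) :
  tensmx (\sum_(x <- r) F x) M = \sum_(x <- r) tensmx (F x) M.
Proof.
elim: r => [|x r IH]; first by rewrite !big_nil tens0mx.
by rewrite !big_cons tensmxDl IH.
Qed.
Lemma tensmx_sumr I m n p q (r : seq I) (A : 'M[C]_(m,n)) (F : I -> 'M[C]_(p,q)) :
  tensmx A (\sum_(x <- r) F x) = \sum_(x <- r) tensmx A (F x).
Proof.
elim: r => [|x r IH]; first by rewrite !big_nil tensmx0.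
by rewrite !big_cons tensmxDr IH.
Qed.

Lemma tens_decomp a b (P : 'M[C]_a) (Q : 'M[C]_b) sP sQ :
  decomp P sP -> decomp Q sQ ->
  decomp (tensmx P Q) [seq (x.1 * y.1, vt x.2 y.2) | x <- sP, y <- sQ].
Proof.
case=> hP -> [hQ ->]; split.
  move=> z /allpairsP [[x y] /= [hx hy ->]] /=.
  by apply: mulr_gt0; [apply: hP | apply: hQ].
rewrite big_allpairs_dep /=.
rewrite tensmx_suml; apply: eq_bigr => x _.
rewrite tensmx_sumr; apply: eq_bigr => y _.
by rewrite tensmxZl tensmxZr scalerA tens_outer mulrC.
Qed.

Lemma sep_SNr a b (W : 'M[C]_(a*b)) : separable W -> SNr W 1.
Proof.
case=> _ [s [hs ->]].
elim: s hs => [|PQ s IH] hs.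
  by exists [::]; split => //; split => //; rewrite !big_nil.
have [hP hQ] := hs PQ (mem_head _ _).
have [s' [hs'1 hs'2]] := IH (fun z zs => hs z (mem_behead (s := PQ :: s) zs)).
have [sP hsP] := psd_decomp hP.
have [sQ hsQ] := psd_decomp hQ.
exists ([seq (x.1 * y.1, vt x.2 y.2) | x <- sP, y <- sQ] ++ s'); split.
  by rewrite big_cons; apply: decomp_cat => //; apply: tens_decomp.
move=> z; rewrite mem_cat => /orP [|]; last exact: hs'2.
by move=> /allpairsP [[x y] /= [_ _ ->]]; apply: rk_vt.
Qed.

End Sep.

Section Key.
Variable C : numClosedFieldType.

Lemma decomp0 n (s : seq (C * 'cV[C]_n)) :
  (forall x, x \in s -> 0 < x.1) ->
  \sum_(x <- s) x.1 *: (x.2 *m adjmx x.2) = 0 ->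
  forall x, x \in s -> x.2 = 0.
Proof.
move=> hp h0 x xs; apply/matrixP => j z; rewrite ord1 [RHS]mxE.
have /matrixP /(_ j j) := h0; rewrite summxE big_seq mxE => /eqP.
rewrite psumr_eq0; last first.
  move=> y ys; rewrite mxE outerE; apply: mulr_ge0; first by apply/ltW/hp.
  exact: mul_conjC_ge0.
move=> /allP /(_ x xs); rewrite xs /= mxE outerE mulf_eq0 (gt_eqF (hp x xs)) /=.
by rewrite mulf_eq0 conjC_eq0 orbb => /eqP.
Qed.


Lemma map_conj_adj m n (B : 'M[C]_(m,n)) : map_mx Num.conj (adjmx B) = B^T.
Proof. by apply/matrixP => i j; rewrite !mxE conjCK. Qed.

Lemma exists_S N N1 N2 (Y : 'M[C]_N) (P : 'M[C]_(N,N1)) (Q : 'M[C]_(N,N2)) :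
  psd Y -> exists S : 'M[C]_(N1,N2),
    adjmx P *m Y *m Q = (adjmx P *m Y *m P) *m S.
Proof.
move=> hY.
set A := adjmx P *m Y *m P; set B := adjmx P *m Y *m Q.
have hYH := psd_herm hY.
have hA : adjmx A = A by rewrite /A !adjmxM adjmxK hYH mulmxA.
have [s [hs hYs]] := psd_decomp hY.
set K := cokermx A^T; set Z := map_mx Num.conj K.
have hAZ : A *m Z = 0.
  have := mulmx_coker A^T; rewrite -/K => /(congr1 (map_mx Num.conj)).
  by rewrite map_mxM map_mx0 -map_trmx -[(map_mx _ A)^T]/(adjmx A) hA.
set E := adjmx Z *m adjmx P.
have hE : forall x, x \in s -> E *m x.2 = 0.
  have [hd1 hd2] := decomp_congr E (conj hs hYs).
  move=> x xs.
  pose f := fun x : C * 'cV[C]_N => (x.1, E *m x.2).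
  have h0 : \sum_(y <- map f s) y.1 *: (y.2 *m adjmx y.2) = 0.
    rewrite -hd2 /E adjmxM !adjmxK.
    have -> : adjmx Z *m adjmx P *m Y *m (P *m Z) = adjmx Z *m (A *m Z) by rewrite /A !mulmxA.
    by rewrite hAZ mulmx0.
  exact: (decomp0 hd1 h0 (map_f f xs)).
have hBZ : adjmx B *m Z = 0.
  rewrite /B !adjmxM adjmxK hYH mulmxA hYs mulmx_sumr !mulmx_suml.
  apply: big1_seq => x /andP [_ xs].
  have -> : adjmx Q *m (x.1 *: (x.2 *m adjmx x.2)) *m P *m Z
        = x.1 *: ((adjmx Q *m x.2) *m adjmx (E *m x.2)).
    by rewrite /E -scalemxAr -!scalemxAl !adjmxM !adjmxK !mulmxA.
  by rewrite hE // adjmx0 mulmx0 scaler0.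
have hBK : B^T *m K = 0.
  have := congr1 (map_mx Num.conj) hBZ.
  rewrite map_mxM map_mx0 map_conj_adj /Z.
  have -> : map_mx Num.conj (map_mx Num.conj K) = K.
    by apply/matrixP => i j; rewrite !mxE conjCK.
  by [].
have : (B^T <= A^T)%MS by rewrite submxE hBK.
case/submxP => D hD; exists D^T.
by rewrite -[B]trmxK hD trmx_mul trmxK.
Qed.

End Key.

Section Key2.
Variable C : numClosedFieldType.
Local Notation PM b m := (@Pm C _ _ b m).

Lemma alg_id N N1 N2 (P : 'M[C]_(N,N1)) (Q : 'M[C]_(N,N2)) (A : 'M[C]_N1)
  (S : 'M[C]_(N1,N2)) (C' : 'M[C]_N2) :
  (P + Q *m adjmx S) *m A *m adjmx (P + Q *m adjmx S)
    + Q *m (C' - adjmx S *m A *m S) *m adjmx Q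
  = P *m A *m adjmx P + P *m (A *m S) *m adjmx Q
    + Q *m (adjmx S *m A) *m adjmx P + Q *m C' *m adjmx Q.
Proof.
rewrite adjmxD adjmxM adjmxK.
rewrite !mulmxDl !mulmxDr mulmxN !mulmxDl mulNmx !mulmxA.
rewrite -!addrA; congr (_ + (_ + (_ + _))).
by rewrite addrC subrK.
Qed.


Lemma block_id N N1 N2 (Y : 'M[C]_N) (P : 'M[C]_(N,N1)) (Q : 'M[C]_(N,N2)) :
  P *m adjmx P + Q *m adjmx Q = 1%:M ->
  Y = P *m (adjmx P *m Y *m P) *m adjmx P + P *m (adjmx P *m Y *m Q) *m adjmx Q
    + Q *m (adjmx Q *m Y *m P) *m adjmx P + Q *m (adjmx Q *m Y *m Q) *m adjmx Q.
Proof.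
move=> hI.
rewrite -{1}[Y]mul1mx -{1}[Y]mulmx1 -hI !mulmxDl !mulmxDr ?mulmxDl !mulmxA.
by rewrite !addrA.
Qed.

Lemma D_id N N1 N2 (Y : 'M[C]_N) (P : 'M[C]_(N,N1)) (Q : 'M[C]_(N,N2))
  (S : 'M[C]_(N1,N2)) :
  adjmx P *m Y *m Q = (adjmx P *m Y *m P) *m S ->
  adjmx Q *m Y *m P = adjmx S *m (adjmx P *m Y *m P) ->
  adjmx (Q - P *m S) *m Y *m (Q - P *m S)
  = adjmx Q *m Y *m Q - adjmx S *m (adjmx P *m Y *m P) *m S.
Proof.
set A := adjmx P *m Y *m P => hS hS'.
have e1 : adjmx S *m adjmx P *m Y *m Q = adjmx S *m A *m S.
  have -> : adjmx S *m adjmx P *m Y *m Q = adjmx S *m (adjmx P *m Y *m Q) by rewrite !mulmxA.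
  by rewrite hS mulmxA.
have e2 : adjmx Q *m Y *m P *m S = adjmx S *m A *m S by rewrite hS'.
have e3 : adjmx S *m adjmx P *m Y *m P *m S = adjmx S *m A *m S.
  by rewrite /A !mulmxA.
rewrite adjmxB adjmxM mulmxBl mulmxBr !mulmxBl !mulmxA e1 e2 e3.
by rewrite subrr subr0.
Qed.


Lemma PPadj a n b (m : 'I_n -> 'I_a) i k j l :
  (PM b m *m adjmx (PM b m)) (mxtens_index (i,k)) (mxtens_index (j,l))
  = (\sum_(j' < n) ((i == m j') && (j == m j'))%:R) * (k == l)%:R.
Proof.
rewrite mxE sum_tens mulr_suml; apply: eq_bigr => j' _.
under eq_bigr => l' _ do rewrite !mxE mxtens_indexK rmorph_nat /= !(can_eq (@mxtens_indexK _ _)) !xpair_eqE.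
case: (i == m j'); case: (j == m j') => /=.
- rewrite mul1r; under eq_bigr => l' _ do rewrite [l == l']eq_sym.
  by rewrite sum_deltar.
- by rewrite big1 ?mul0r // => l' _; rewrite ?mul0r ?mulr0.
- by rewrite big1 ?mul0r // => l' _; rewrite ?mul0r ?mulr0.
- by rewrite big1 ?mul0r // => l' _; rewrite ?mul0r ?mulr0.
Qed.


Lemma Pm_split n b :
  PM b (widen_ord (leqnSn n)) *m adjmx (PM b (widen_ord (leqnSn n)))
  + PM b (fun _ : 'I_1 => @ord_max n) *m adjmx (PM b (fun _ : 'I_1 => @ord_max n))
  = 1%:M.
Proof.
apply/matrixP => u v.
rewrite -[u](@mxtens_unindexK n.+1 b) -[v](@mxtens_unindexK n.+1 b).
case: (mxtens_unindex u) => i k; case: (mxtens_unindex v) => j l.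
rewrite mxE !PPadj big_ord1 -mulrDl mxE (can_eq (@mxtens_indexK _ _)) xpair_eqE.
have -> : ((i == j) && (k == l))%:R = (i == j)%:R * (k == l)%:R :> C by rewrite -natrM mulnb.
congr (_ * _).
case: (ltnP i n) => hi.
  have -> : (i == ord_max) = false.
    by apply/negbTE; rewrite -val_eqE /= neq_ltn hi.
  rewrite /= addr0 (bigD1 (Ordinal hi)) //= big1 ?addr0.
    have -> : i == widen_ord (leqnSn n) (Ordinal hi) by rewrite -val_eqE.
    by rewrite /= eq_sym; congr (_ %:R); congr (_ == _); apply: val_inj.
  move=> j' hj'; have -> : (i == widen_ord (leqnSn n) j') = false.
    apply/negbTE; apply: contra hj' => /eqP hij.
    by apply/eqP; apply: val_inj; rewrite /= hij.
  by [].
have hi' : i = ord_max by apply: val_inj; apply/eqP; rewrite eqn_leq hi -ltnS ltn_ord.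
rewrite big1 ?add0r; last first.
  move=> j' _; have -> : (i == widen_ord (leqnSn n) j') = false.
    by apply/negbTE; rewrite hi' -val_eqE /= neq_ltn ltn_ord orbT.
  by [].
by rewrite hi' eqxx /= eq_sym.
Qed.


Lemma key n b (Y : 'M[C]_(n.+1 * b)) r :
  psd Y -> SNr (subblock Y (widen_ord (leqnSn n))) r -> SNr Y r.+1.
Proof.
move=> hY [s [hs hr]].
set P := PM b (widen_ord (leqnSn n)).
set Q := PM b (fun _ : 'I_1 => @ord_max n).
have hI : P *m adjmx P + Q *m adjmx Q = 1%:M by apply: Pm_split.
rewrite subblockE -/P in hs.
set A := adjmx P *m Y *m P in hs.
have hYH := psd_herm hY.
have [S hS] := exists_S P Q hY; rewrite -/A in hS.
have hAH : adjmx A = A by rewrite /A !adjmxM adjmxK hYH mulmxA.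
have hS' : adjmx Q *m Y *m P = adjmx S *m A.
  by rewrite -hAH -adjmxM -hS !adjmxM adjmxK hYH mulmxA.
set T := P + Q *m adjmx S.
set V := Q - P *m S.
have hD : psd (adjmx V *m Y *m V) by apply: psd_congr.
have [s2 hs2] := psd_decomp hD.
have hYe : Y = T *m A *m adjmx T + Q *m (adjmx V *m Y *m V) *m adjmx Q.
  rewrite /V D_id // -/A /T alg_id -hS -hS' /A.
  exact: block_id.
exists (map (fun x => (x.1, T *m x.2)) s ++ map (fun x => (x.1, Q *m x.2)) s2).
split.
  rewrite {1}hYe; apply: decomp_cat; exact: decomp_congr.
move=> x; rewrite mem_cat => /orP [] /mapP [y ys ->] /=.
  rewrite /T mulmxDl -mulmxA.
  apply: leq_trans (rk_add _ _) _; rewrite -[r.+1]addn1.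
  apply: leq_add; first by apply: leq_trans (rk_Pm _ _) (hr y ys).
  by apply: leq_trans (rk_Pm _ _) (rk_1 _).
by apply: leq_trans (rk_Pm _ _) (leq_trans (rk_1 _) _).
Qed.

End Key2.

End Helpers.
Import Helpers.

Theorem theorem18 (R : realType) (d1 d2 k : nat) (X : 'M[R[i]]_(d1 * d2)) :
  (d1 <= d2)%N ->
  psd X ->
  ~ (X = 0) ->
  schmidt_number_is X k ->
  (2 <= k)%N ->
  exists m : 'I_(d1 - k + 2) -> 'I_d1,
    injective m /\ entangled (subblock X m).
Proof.
move=> _ hX _ [hk hmin] hk2.
have hkd : (k <= d1)%N.
  apply: hmin; case: hk => s [hs _]; exists s; split => // x _.
  by apply: leq_trans (sr_le _) _; apply: rank_leq_row.
apply: NNPP => hne.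
have hsep : forall n (m : 'I_n -> 'I_d1), n = (d1 - k + 2)%N ->
    injective m -> separable (subblock X m).
  move=> n m e; move: m; rewrite e => m hm.
  apply: NNPP => hns; apply: hne; exists m; split => //; split => //.
  exact: psd_subblock.
have hind : forall n, (d1 - k + 2 <= n)%N -> forall m : 'I_n -> 'I_d1,
    injective m -> SNr (subblock X m) (n - (d1 - k + 2)).+1.
  elim => [|n IH] hn m hm.
    by move: hn; rewrite leqn0 addn2.
  case: (ltnP (d1 - k + 2) n.+1) => hlt; last first.
    have e : n.+1 = (d1 - k + 2)%N by apply/eqP; rewrite eqn_leq hn hlt.
    have -> : (n.+1 - (d1 - k + 2)).+1 = 1%N by rewrite e subnn.
    apply: sep_SNr; exact: hsep.
  have hm' : injective (m \o widen_ord (leqnSn n)).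
    by move=> x y /hm /(congr1 val) /= hxy; apply: val_inj.
  have := IH hlt _ hm'; rewrite -subblock_comp => h.
  rewrite subSn //; apply: key h; exact: psd_subblock.
have := hind d1 _ id (fun x y (e : id x = id y) => e).
rewrite subblock_id => /(_ _) h.
have : (k <= (d1 - (d1 - k + 2)).+1)%N.
  apply: hmin; apply: SNr_SN; apply: h.
  lia.
lia.
Qed.
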